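(* Let $G$ be a cyclic group of prime order $p$ generated by $g$, and $I=\ker(\mathbb{Z}_p[G]\to\mathbb{Z}_p)$. Then: $\hat H^*(g,S^*(\mathbb{Z}_p))$ is a polynomial algebra over $\mathbb{F}_p$ on one ordinary generator of degree $1$; $\hat H^*(g,S^*(\mathbb{Z}_p[G]))$ is a polynomial algebra on one ordinary generator of degree $p$; and if $p$ is odd, $\hat H^*(g,S^*(I))$ is the tensor product of a polynomial algebra on one ordinary generator of degree $p$ and an exterior algebra on one super generator of degree $1$.
   Context: $S^*(A)=\bigoplus_n S^n(A)$ is the symmetric algebra over $\mathbb{Z}_p$, graded by $n$. For a graded $G$-algebra $R$, $\hat H^*(g,R)=\hat H^0(g,R)\oplus\hat H^1(g,R)$ (Tate cohomology computed degreewise) is a graded super-commutative $\mathbb{F}_p$-algebra via cup product (identifying $\hat H^2$ with $\hat H^0$ by periodicity of cohomology of cyclic groups); elements of $\hat H^0$ are called ordinary and elements of $\hat H^1$ super. *)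

(* Defs.v *)
From HB Require Import structures.
From Stdlib Require Import ProofIrrelevance FunctionalExtensionality.
From mathcomp Require Import all_boot all_order all_algebra.
From mathcomp Require Import boolp.
From mathcomp Require Import mpoly.
Set Implicit Arguments. Unset Strict Implicit. Unset Printing Implicit Defensive.
Import Order.TTheory GRing.Theory Num.Theory.
Local Open Scope ring_scope.

(* The ring Z_p of p-adic integers, as the inverse limit of the rings  *)
(* Z/p^(n+1): an element is a compatible sequence (f n)_n of integers  *)
(* with f n = f (n+1) mod p^(n+1) (hence 0 <= f n < p^(n+1)).          *)
(* To always get a nontrivial ring we use the modulus base             *)
(* zq p := p.-2.+2 (= p for every p >= 2, in particular p prime).     *)
Section PAdic.
Variable p : nat.
Definition zq : nat := p.-2.+2.
Local Notation md n := ((zq ^ n.+1)%N%:Z).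

Definition zp_compat (f : nat -> int) := forall n, f n = modz (f n.+1) (md n).

Record padic_int := MkZp { zpval :> nat -> int; zpvalP : zp_compat zpval }.

HB.instance Definition _ := gen_eqMixin padic_int.
HB.instance Definition _ := gen_choiceMixin padic_int.

Lemma zp_ext (a b : padic_int) : (forall n, a n = b n) -> a = b.
Proof.
case: a b => [a Ha] [b Hb] /= E.
have eab : a = b by apply: functional_extensionality.
subst b; congr MkZp; apply: proof_irrelevance.
Qed.

Lemma md_gt0 n : (0 < md n)%R.
Proof. by rewrite ltz_nat expn_gt0. Qed.

Lemma md_neq0 n : md n != 0.
Proof. by rewrite eqz_nat expn_eq0. Qed.

Lemma modz_modS (x : int) n : modz (modz x (md n.+1)) (md n) = modz x (md n).
Proof.
apply/eqP; rewrite eqz_mod_dvd.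
have -> : modz x (md n.+1) - x = - (divz x (md n.+1) * md n.+1).
  by rewrite /modz addrC addrA addNr add0r.
rewrite rpredN; apply: dvdz_mull.
by change (zq ^ n.+1 %| zq ^ n.+2)%N; exact: dvdn_exp2l.
Qed.

Lemma zp_canon (a : padic_int) n : modz (a n) (md n) = a n.
Proof. by rewrite (zpvalP a n) modz_mod. Qed.

Definition zp_lift (f : nat -> int) (Hf : forall n, modz (f n) (md n) = modz (f n.+1) (md n)) : padic_int.
Proof.
exists (fun n => modz (f n) (md n)) => n; by rewrite modz_modS Hf.
Defined.

Lemma zp_liftE f Hf n : @zp_lift f Hf n = modz (f n) (md n).
Proof. by []. Qed.

Lemma zp_addP (a b : padic_int) n : modz (a n + b n) (md n) = modz (a n.+1 + b n.+1) (md n).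
Proof. by rewrite (zpvalP a n) (zpvalP b n) modzDml modzDmr. Qed.
Lemma zp_mulP (a b : padic_int) n : modz (a n * b n) (md n) = modz (a n.+1 * b n.+1) (md n).
Proof. by rewrite (zpvalP a n) (zpvalP b n) modzMml modzMmr. Qed.
Lemma zp_oppP (a : padic_int) n : modz (- a n) (md n) = modz (- a n.+1) (md n).
Proof. by rewrite (zpvalP a n) modzNm. Qed.
Lemma zp_cstP (c : int) n : modz c (md n) = modz c (md n).
Proof. by []. Qed.

Definition zp_add (a b : padic_int) := zp_lift (zp_addP a b).
Definition zp_mul (a b : padic_int) := zp_lift (zp_mulP a b).
Definition zp_opp (a : padic_int) := zp_lift (zp_oppP a).
Definition zp_zero := zp_lift (zp_cstP 0).
Definition zp_one := zp_lift (zp_cstP 1).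

Lemma zp_addA : associative zp_add.
Proof. by move=> a b c; apply: zp_ext => n; rewrite !zp_liftE modzDml modzDmr addrA. Qed.
Lemma zp_addC : commutative zp_add.
Proof. by move=> a b; apply: zp_ext => n; rewrite !zp_liftE addrC. Qed.
Lemma zp_add0 : left_id zp_zero zp_add.
Proof. by move=> a; apply: zp_ext => n; rewrite !zp_liftE modzDml add0r zp_canon. Qed.
Lemma zp_addN : left_inverse zp_zero zp_opp zp_add.
Proof. by move=> a; apply: zp_ext => n; rewrite !zp_liftE modzDml addNr. Qed.

HB.instance Definition _ := GRing.isZmodule.Build padic_int zp_addA zp_addC zp_add0 zp_addN.

Lemma zp_mulA : associative zp_mul.
Proof. by move=> a b c; apply: zp_ext => n; rewrite !zp_liftE modzMml modzMmr mulrA. Qed.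
Lemma zp_mulC : commutative zp_mul.
Proof. by move=> a b; apply: zp_ext => n; rewrite !zp_liftE mulrC. Qed.
Lemma zp_mul1 : left_id zp_one zp_mul.
Proof. by move=> a; apply: zp_ext => n; rewrite !zp_liftE modzMml mul1r zp_canon. Qed.
Lemma zp_mulD : left_distributive zp_mul (@GRing.add padic_int).
Proof.
move=> a b c; change (zp_mul (zp_add a b) c = zp_add (zp_mul a c) (zp_mul b c)).
apply: zp_ext => n.
by rewrite !zp_liftE modzMml modzDml modzDmr mulrDl.
Qed.
Lemma zp_one_neq0 : zp_one != (0 : padic_int).
Proof.
apply/eqP; change (zp_one <> zp_zero) => /(congr1 (fun a : padic_int => a 0%N)).
rewrite !zp_liftE mod0z modz_small //.
Qed.

HB.instance Definition _ :=
  GRing.Zmodule_isComNzRing.Build padic_int zp_mulA zp_mulC zp_mul1 zp_mulD zp_one_neq0.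

End PAdic.

(* G = <g> is cyclic of order p.  A G-lattice which is free of rank r  *)
(* over the coefficient ring R, with basis (e_j)_{j<r}, is given by    *)
(* the integer matrix A of g:  g e_j = sum_i A i j e_i.                *)
(* Its symmetric algebra S^*(M) is the polynomial ring R[x_0..x_{r-1}] *)
(* ({mpoly R[r]}, x_j = e_j), graded by total degree (S^n = the        *)
(* homogeneous polynomials of degree n), on which g acts by the        *)
(* algebra automorphism x_j |-> sum_i A i j x_i.                       *)
Section Tate.
Variables (R : comNzRingType) (p r : nat) (A : 'M[int]_r).

Definition gvars : r.-tuple {mpoly R[r]} :=
  [tuple \sum_(i < r) (A i j)%:~R *: 'X_i | j < r].

Definition gact (f : {mpoly R[r]}) : {mpoly R[r]} := f \mPo gvars.
Definition gpow (k : nat) (f : {mpoly R[r]}) := iter k gact f.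
Definition normop (f : {mpoly R[r]}) := \sum_(k < p) gpow k f.

Definition isSn (n : nat) (f : {mpoly R[r]}) := all (fun m => mdeg m == n) (msupp f).

(* Tate cohomology of <g> acting on S^n(M), computed degreewise:
     H^0 = ker(g - 1) / im N ,   H^1 = ker N / im (g - 1)            *)
Definition Z0 n f := isSn n f /\ gact f = f.
Definition B0 n f := exists h, isSn n h /\ f = normop h.
Definition Z1 n f := isSn n f /\ normop f = 0.
Definition B1 n f := exists h, isSn n h /\ f = gact h - h.

(* cup product H^1 x H^1 -> H^2 = H^0 for the cyclic group <g>
   (on representatives):  a u b = sum_{0 <= i < j < p} g^i a * g^j b.
   Products involving a class of H^0 are products of representatives. *)
Definition cup11 (a b : {mpoly R[r]}) :=
  \sum_(j < p) \sum_(i < j) gpow i a * gpow j b.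

Definition H0_zero n := forall f, Z0 n f -> B0 n f.
Definition H1_zero n := forall f, Z1 n f -> B1 n f.
Definition H0_line n x :=
  Z0 n x /\ ~ B0 n x /\ forall f, Z0 n f -> exists c : R, B0 n (f - c *: x).
Definition H1_line n x :=
  Z1 n x /\ ~ B1 n x /\ forall f, Z1 n f -> exists c : R, B1 n (f - c *: x).

(* H^*(g, S^*(M)) is a polynomial algebra over F_p on one ordinary
   generator c of degree d: the monomials c^k (k >= 0), of degree dk,
   form a basis of the graded F_p-algebra H^*.                        *)
Definition Tate_poly_ord (d : nat) :=
  exists c, Z0 d c /\
    forall n, H1_zero n /\
      (if (d %| n)%N then H0_line n (c ^+ (n %/ d)) else H0_zero n).

(* H^*(g, S^*(M)) is the tensor product of a polynomial algebra on one
   ordinary generator c of degree d and an exterior algebra on one super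
   generator e of degree 1: e u e = 0 and the monomials c^k (degree dk,
   ordinary) and c^k e (degree dk+1, super) form a basis of H^*.       *)
Definition Tate_poly_ext (d : nat) :=
  exists c e, Z0 d c /\ Z1 1 e /\ B0 2 (cup11 e e) /\
    forall n,
      (if (d %| n)%N then H0_line n (c ^+ (n %/ d)) else H0_zero n) /\
      (if (n %% d == 1)%N then H1_line n (c ^+ (n %/ d) * e) else H1_zero n).

End Tate.

Definition A_triv : 'M[int]_1 := 1%:M.
(* The group ring Z_p[G], basis e_i = g^i (i < p): g e_i = e_{i+1 mod p}. *)
Definition A_reg (p : nat) : 'M[int]_p := \matrix_(i, j) ((i == ordS j) : int).
(* The augmentation ideal I = ker(Z_p[G] -> Z_p), with Z_p-basis
   y_k = e_{k+1} - e_0 (k < p-1):  g y_k = y_{k+1} - y_0 for k+1 < p-1,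
   and g y_{p-2} = e_0 - e_1 = - y_0.                                 *)
Definition A_aug (p : nat) : 'M[int]_p.-1 :=
  \matrix_(i, j) (((i : nat) == j.+1 : int) - ((i : nat) == 0%N : int)).

(* Main.v *)
Require Import Defs.
From HB Require Import structures.
From mathcomp Require Import all_boot all_order all_algebra.
From mathcomp Require Import mpoly.
From mathcomp Require Import fingroup perm.
From mathcomp Require Import zify ring.

Module L1.
Set Implicit Arguments. Unset Strict Implicit. Unset Printing Implicit Defensive.
Import Order.TTheory GRing.Theory Num.Theory.

Section Gen.
Local Open Scope ring_scope.

Lemma comp_mpolyA n k l (R : comNzRingType) (F : {mpoly R[n]})
  (t : n.-tuple {mpoly R[k]}) (u : k.-tuple {mpoly R[l]}) :
  (F \mPo t) \mPo u = F \mPo [tuple (tnth t i) \mPo u | i < n].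
Proof.
rewrite (comp_mpolyEX F t) (comp_mpolyEX F) raddf_sum /=; apply: eq_bigr => m _.
rewrite comp_mpolyZ; congr (_ *: _).
rewrite !comp_mpolyX rmorph_prod /=; apply: eq_bigr => i _.
by rewrite rmorphXn /= tnth_mktuple.
Qed.

Lemma comp_homog n k (R : comNzRingType) d (F : {mpoly R[n]})
  (t : n.-tuple {mpoly R[k]}) :
  (forall i, tnth t i \is 1.-homog) -> F \is d.-homog -> F \mPo t \is d.-homog.
Proof.
move=> ht /dhomogP hF; rewrite comp_mpolyE big_seq; apply: rpred_sum => m mF.
apply: rpredZ; have e : mdeg m = d := hF m mF.
have -> : d = (\sum_i m i)%N by rewrite -e mdegE.
elim/big_rec2: _ => [|i d' P _ hP]; first exact: dhomog1.
have := dhomogM (dhomogMn (m i) (ht i)) hP; by rewrite mul1n.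
Qed.

Lemma isSnE (R : comNzRingType) r n (f : {mpoly R[r]}) : isSn n f = (f \is n.-homog).
Proof. by rewrite dhomogE. Qed.

End Gen.

Section Gen2.
Local Open Scope ring_scope.
Lemma mcoeff_sumE (R : comNzRingType) n I (s : seq I) (P : pred I) (F : I -> {mpoly R[n]}) m :
  (\sum_(i <- s | P i) F i)@_m = \sum_(i <- s | P i) (F i)@_m.
Proof. exact: (raddf_sum (mcoeff m)). Qed.
End Gen2.

End L1.
Import L1.

Module L2.
Set Implicit Arguments. Unset Strict Implicit. Unset Printing Implicit Defensive.
Import Order.TTheory GRing.Theory Num.Theory.

Section Restr.
Local Open Scope ring_scope.
Variables (R : comNzRingType) (r : nat).

Definition restr (P : pred 'X_{1..r}) (u : {mpoly R[r]}) : {mpoly R[r]} :=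
  \sum_(m <- msupp u | P m) u@_m *: 'X_[m].

Lemma mcoeff_restr P u m : (restr P u)@_m = if P m then u@_m else 0.
Proof.
rewrite /restr raddf_sum /=.
under eq_bigr do rewrite mcoeffZ mcoeffX.
rewrite big_mkcond /=.
case: (boolP (m \in msupp u)) => mu.
  rewrite (bigD1_seq m) ?msupp_uniq //= big1 ?addr0.
    by case: (P m); rewrite ?eqxx ?mulr1.
  by move=> m' ne; case: (P m'); rewrite // (negbTE ne) mulr0.
rewrite big1 ?(memN_msupp_eq0 mu); first by case: (P m).
move=> m' _; case: (P m') => //.
by case: eqP => [e|]; [rewrite e (memN_msupp_eq0 mu) mul0r | rewrite mulr0].
Qed.

Lemma restr_homog P u d : u \is d.-homog -> restr P u \is d.-homog.
Proof.
move=> /dhomogP hu; rewrite /restr big_seq_cond; apply: rpred_sum => m /andP[mu _].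
apply: rpredZ; rewrite dhomogX; apply/eqP; exact: hu.
Qed.

End Restr.

Section GAct.
Local Open Scope ring_scope.
Variables (R : comNzRingType) (r : nat) (A : 'M[int]_r).
Implicit Types (f g : {mpoly R[r]}) (c : R).

Lemma gvars_homog i : tnth (gvars R A) i \is 1.-homog.
Proof.
rewrite tnth_mktuple; apply: rpred_sum => j _; apply: rpredZ.
by rewrite dhomogX /= mdeg1.
Qed.

Lemma gact_homog d f : f \is d.-homog -> gact A f \is d.-homog.
Proof. by apply: comp_homog; exact: gvars_homog. Qed.

Lemma gpow_homog d k f : f \is d.-homog -> gpow A k f \is d.-homog.
Proof. by move=> hf; elim: k => //= k ih; apply: gact_homog. Qed.

Lemma normop_homog p d f : f \is d.-homog -> normop p A f \is d.-homog.
Proof. by move=> hf; apply: rpred_sum => k _; apply: gpow_homog. Qed.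

Lemma gactD f g : gact A (f + g) = gact A f + gact A g.
Proof. exact: comp_mpolyD. Qed.
Lemma gactB f g : gact A (f - g) = gact A f - gact A g.
Proof. exact: comp_mpolyB. Qed.
Lemma gactN f : gact A (- f) = - gact A f.
Proof. exact: comp_mpolyN. Qed.
Lemma gactZ c f : gact A (c *: f) = c *: gact A f.
Proof. exact: comp_mpolyZ. Qed.
Lemma gactM f g : gact A (f * g) = gact A f * gact A g.
Proof. exact: (rmorphM (comp_mpoly (gvars R A))). Qed.
Lemma gact0 : gact A (0 : {mpoly R[r]}) = 0.
Proof. exact: comp_mpoly0. Qed.
Lemma gact_sum I (s : seq I) P (F : I -> {mpoly R[r]}) :
  gact A (\sum_(i <- s | P i) F i) = \sum_(i <- s | P i) gact A (F i).
Proof. exact: (raddf_sum (comp_mpoly (gvars R A))). Qed.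

Lemma gpowS k f : gpow A k.+1 f = gact A (gpow A k f).
Proof. by []. Qed.
Lemma gpowSr k f : gpow A k.+1 f = gpow A k (gact A f).
Proof. exact: iterSr. Qed.
Lemma gpowD i j f : gpow A (i + j) f = gpow A i (gpow A j f).
Proof. exact: iterD. Qed.
Lemma gpow0f f : gpow A 0 f = f.
Proof. by []. Qed.

Lemma gpowDf k f g : gpow A k (f + g) = gpow A k f + gpow A k g.
Proof. by elim: k => //= k ->; rewrite gactD. Qed.
Lemma gpowBf k f g : gpow A k (f - g) = gpow A k f - gpow A k g.
Proof. by elim: k => //= k ->; rewrite gactB. Qed.
Lemma gpowZf k c f : gpow A k (c *: f) = c *: gpow A k f.
Proof. by elim: k => //= k ->; rewrite gactZ. Qed.
Lemma gpowMf k f g : gpow A k (f * g) = gpow A k f * gpow A k g.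
Proof. by elim: k => //= k ->; rewrite gactM. Qed.
Lemma gpow0 k : gpow A k (0 : {mpoly R[r]}) = 0.
Proof. by elim: k => //= k ->; rewrite gact0. Qed.
Lemma gpow_sum k I (s : seq I) P (F : I -> {mpoly R[r]}) :
  gpow A k (\sum_(i <- s | P i) F i) = \sum_(i <- s | P i) gpow A k (F i).
Proof. by elim: k => [|k ih] //=; rewrite ih gact_sum. Qed.

Lemma gpow_fix k f : gact A f = f -> gpow A k f = f.
Proof. by move=> hf; elim: k => //= k ->. Qed.

Lemma tele_gpow j f : \sum_(i < j) (gpow A i.+1 f - gpow A i f) = gpow A j f - f.
Proof.
elim: j => [|j ih]; first by rewrite big_ord0 subrr.
by rewrite big_ord_recr /= ih addrC addrA subrK.
Qed.

Lemma gact_partial j f :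
  gact A (\sum_(i < j) gpow A i f) - \sum_(i < j) gpow A i f = gpow A j f - f.
Proof. by rewrite gact_sum -sumrB -tele_gpow. Qed.

Variable p : nat.

Lemma normopD f g : normop p A (f + g) = normop p A f + normop p A g.
Proof. by rewrite /normop -big_split /=; apply: eq_bigr => k _; rewrite gpowDf. Qed.
Lemma normopB f g : normop p A (f - g) = normop p A f - normop p A g.
Proof. by rewrite /normop -sumrB /=; apply: eq_bigr => k _; rewrite gpowBf. Qed.
Lemma normopZ c f : normop p A (c *: f) = c *: normop p A f.
Proof. by rewrite /normop scaler_sumr; apply: eq_bigr => k _; rewrite gpowZf. Qed.
Lemma normop0 : normop p A (0 : {mpoly R[r]}) = 0.
Proof. by rewrite /normop big1 // => k _; rewrite gpow0. Qed.
Lemma normop_sum I (s : seq I) P (F : I -> {mpoly R[r]}) :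
  normop p A (\sum_(i <- s | P i) F i) = \sum_(i <- s | P i) normop p A (F i).
Proof.
rewrite /normop exchange_big /=; apply: eq_bigr => k _; exact: gpow_sum.
Qed.
Lemma normopMl (c : {mpoly R[r]}) f : gact A c = c -> normop p A (c * f) = c * normop p A f.
Proof.
move=> hc; rewrite /normop mulr_sumr; apply: eq_bigr => k _.
by rewrite gpowMf gpow_fix.
Qed.
Lemma normop_fix f : gact A f = f -> normop p A f = f *+ p.
Proof.
move=> hf; rewrite /normop (eq_bigr (fun _ => f)) ?sumr_const ?card_ord //.
by move=> k _; rewrite gpow_fix.
Qed.

Lemma normop_gact f : normop p A (gact A f - f) = gpow A p f - f.
Proof.
rewrite /normop -(tele_gpow p f); apply: eq_bigr => k _.
by rewrite gpowBf gpowSr.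
Qed.

Lemma gact_normop f : gact A (normop p A f) - normop p A f = gpow A p f - f.
Proof. exact: gact_partial. Qed.

End GAct.

End L2.
Import L2.

Module L3.
Set Implicit Arguments. Unset Strict Implicit. Unset Printing Implicit Defensive.
Import Order.TTheory GRing.Theory Num.Theory.

Section MP.
Variable r : nat.
Definition mp (t : 'S_r) (m : 'X_{1..r}) : 'X_{1..r} := [multinom m (t i) | i < r].

Lemma mpM t1 t2 m : mp (t1 * t2)%g m = mp t1 (mp t2 m).
Proof. by apply/mnmP => i; rewrite !mnmE permM. Qed.
Lemma mp1 m : mp 1%g m = m.
Proof. by apply/mnmP => i; rewrite !mnmE perm1. Qed.
Lemma mp_inj t : injective (mp t).
Proof.
move=> m1 m2 /mnmP h; apply/mnmP => i.
by move: (h (t^-1 i)%g); rewrite !mnmE permKV.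
Qed.
Lemma mp_deg t m : mdeg (mp t m) = mdeg m.
Proof. exact: mdeg_mperm. Qed.
End MP.

Section PermFW.
Local Open Scope ring_scope.
Variables (R : comNzRingType) (p r : nat) (A : 'M[int]_r) (s : 'S_r).
Hypothesis Rtf : forall a : R, a *+ p = 0 -> a = 0.
Hypothesis R1 : forall a : R, a *+ p != 1.
Hypotheses (hpr : prime p) (hs : forall f : {mpoly R[r]}, gact A f = msym s f) (hsp : (s ^+ p)%g = 1%g).
Implicit Types (f g u v : {mpoly R[r]}) (m : 'X_{1..r}).

Lemma p_gt0 : (0 < p)%N. Proof. exact: prime_gt0. Qed.
Lemma p_gt1 : (1 < p)%N. Proof. exact: prime_gt1. Qed.

Lemma gpow_sym k f : gpow A k f = msym (s ^+ k)%g f.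
Proof.
elim: k => [|k ih]; first by rewrite msym1m.
by rewrite gpowS ih hs -msymMm -expgSr.
Qed.

Lemma coef_gpow k f m : (gpow A k f)@_m = f@_(mp (s ^+ k)%g m).
Proof. by rewrite gpow_sym mcoeff_sym. Qed.

Lemma mp_mod k m : mp (s ^+ (k %% p))%g m = mp (s ^+ k)%g m.
Proof. by rewrite expg_mod. Qed.

Lemma mpX i j m : mp (s ^+ i)%g (mp (s ^+ j)%g m) = mp (s ^+ (i + j))%g m.
Proof. by rewrite -mpM expgnDr. Qed.

Definition fixedm m := mp s m == m.

Lemma fixed_pow k m : fixedm m -> mp (s ^+ k)%g m = m.
Proof.
move/eqP => hm; elim: k => [|k ih]; first by rewrite mp1.
by rewrite expgSr mpM hm.
Qed.

Lemma nonfixed_pow k m : ~~ fixedm m -> ~~ fixedm (mp (s ^+ k)%g m).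
Proof.
move=> hm; apply/contra: hm => /eqP h; apply/eqP; apply: (@mp_inj _ (s ^+ k)%g).
by rewrite -mpM -expgSr expgS mpM.
Qed.

Lemma mp_powfix t k m : mp t m = m -> mp (t ^+ k)%g m = m.
Proof.
move=> h; elim: k => [|k ih]; first by rewrite mp1.
by rewrite expgSr mpM h.
Qed.

Lemma distinct_lt m i j : ~~ fixedm m -> (i < j)%N -> (j < p)%N ->
  mp (s ^+ i)%g m <> mp (s ^+ j)%g m.
Proof.
move=> nf lij ljp e.
have hd : mp (s ^+ (j - i))%g m = m.
  apply: (@mp_inj _ (s ^+ i)%g); rewrite mpX e; congr (mp _ m); congr (_ ^+ _)%g; lia.
have d_gt0 : (0 < j - i)%N by lia.
have cop : coprime (j - i) p.
  rewrite coprime_sym prime_coprime //; apply/negP => /dvdn_leq; lia.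
case: (egcdnP p d_gt0) => km kn hk _.
move: cop; rewrite /coprime => /eqP g1; rewrite g1 in hk.
have : mp ((s ^+ (j - i)) ^+ km)%g m = m by apply: mp_powfix.
rewrite -expgnA mulnC hk -(expg_mod _ hsp) modnMDl modn_small ?p_gt1 // expg1 => h.
by move: nf; rewrite /fixedm h eqxx.
Qed.

Lemma distinct m i j : ~~ fixedm m -> (i < p)%N -> (j < p)%N ->
  mp (s ^+ i)%g m = mp (s ^+ j)%g m -> i = j.
Proof.
move=> nf hi hj e; case: (ltngtP i j) => // h.
- by case: (distinct_lt nf h hj).
- by case: (distinct_lt nf h hi).
Qed.

Definition rep m := [forall k : 'I_p, (m <= mp (s ^+ k)%g m)%O].
Definition Rp m := ~~ fixedm m && rep m.

Lemma rep_unique m : ~~ fixedm m ->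
  exists k0 : 'I_p, forall j : 'I_p, Rp (mp (s ^+ j)%g m) = (j == k0).
Proof.
move=> nf; pose i0 : 'I_p := Ordinal p_gt0.
case: (@arg_minP _ _ _ i0 xpredT (fun k : 'I_p => mp (s ^+ k)%g m) isT) => k0 _ hmin.
exists k0 => j; rewrite /Rp nonfixed_pow //=.
case: (eqVneq j k0) => [-> | ne].
  apply/forallP => k; rewrite mpX -(mp_mod (k + k0)).
  exact: (hmin (Ordinal (ltn_pmod (k + k0)%N p_gt0)) isT).
apply/negP => /forallP hr.
pose a : 'I_p := Ordinal (ltn_pmod (k0 + p - j)%N p_gt0).
have := hr a; rewrite mpX -(mp_mod (a + j)) /=.
have -> : (((k0 + p - j) %% p + j) %% p = k0)%N.
  rewrite modnDml; have -> : (k0 + p - j + j = k0 + p)%N by have := ltn_ord j; lia.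
  by rewrite modnDr modn_small.
move=> h1; have h2 := hmin j isT.
have e : mp (s ^+ j)%g m = mp (s ^+ k0)%g m by apply/le_anti; rewrite h1 h2.
have := @distinct m j k0 nf (ltn_ord j) (ltn_ord k0) e => /val_inj ejk.
by move: ne; rewrite ejk eqxx.
Qed.

Lemma sum_Rp (c : R) m : ~~ fixedm m ->
  \sum_(j < p) (if Rp (mp (s ^+ j)%g m) then c else 0) = c.
Proof.
move=> nf; case: (rep_unique nf) => k0 hk.
rewrite (bigD1 k0) //= hk eqxx big1 ?addr0 // => j ne; by rewrite hk (negbTE ne).
Qed.

Definition Fixp u := restr fixedm u.
Definition Ep u := restr Rp u.

Lemma coef_gE j v m : (gpow A j (Ep v))@_m =
  if Rp (mp (s ^+ j)%g m) then v@_(mp (s ^+ j)%g m) else 0.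
Proof. by rewrite coef_gpow mcoeff_restr. Qed.

Lemma decomp u : u = Fixp u + \sum_(j < p) gpow A j (Ep (gpow A (p - j) u)).
Proof.
apply/mpolyP => m; rewrite mcoeffD mcoeff_restr mcoeff_sumE.
rewrite (eq_bigr (fun j : 'I_p => if Rp (mp (s ^+ j)%g m) then u@_m else 0)); last first.
  move=> j _; rewrite coef_gE coef_gpow mpX subnK ?hsp ?mp1 //; exact: ltnW.
case: (boolP (fixedm m)) => hf.
  rewrite big1 ?addr0 // => j _; by rewrite fixed_pow // /Rp hf.
by rewrite add0r sum_Rp.
Qed.

Lemma perm_H0 u : gact A u = u -> u = Fixp u + normop p A (Ep u).
Proof.
move=> hu; rewrite {1}[u]decomp; congr (_ + _); rewrite /normop; apply: eq_bigr => j _.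
by rewrite (gpow_fix _ hu).
Qed.

Lemma coef_normop u m : (normop p A u)@_m = \sum_(k < p) u@_(mp (s ^+ k)%g m).
Proof. rewrite /normop raddf_sum; apply: eq_bigr => k _; exact: coef_gpow. Qed.

Lemma coef_normop_fixed u m : fixedm m -> (normop p A u)@_m = u@_m *+ p.
Proof.
move=> hf; rewrite coef_normop (eq_bigr (fun _ => u@_m)) ?sumr_const ?card_ord //.
by move=> k _; rewrite fixed_pow.
Qed.

Lemma sum_rev (F : nat -> R) : (forall k, F (k %% p)%N = F k) ->
  \sum_(j < p) F (p - j)%N = \sum_(k < p) F k.
Proof.
move=> hF.
pose h (j : 'I_p) : 'I_p := Ordinal (ltn_pmod (p - j)%N p_gt0).
have hinj : injective h.
  move=> j1 j2 /(congr1 val) /=.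
  have := ltn_ord j1; have := ltn_ord j2.
  case: (posnP j1) => [e1|g1]; case: (posnP j2) => [e2|g2] l2 l1.
  - by move=> _; apply/val_inj; rewrite /= e1 e2.
  - by rewrite e1 subn0 modnn modn_small; lia.
  - by rewrite e2 subn0 modnn modn_small; lia.
  - rewrite !modn_small; try lia.
    by move=> e; apply/val_inj => /=; lia.
rewrite [RHS](reindex_inj hinj) /=; apply: eq_bigr => j _; by rewrite hF.
Qed.

Variable n : nat.

Lemma perm_H1 u : u \is n.-homog -> normop p A u = 0 ->
  exists h, h \is n.-homog /\ u = gact A h - h.
Proof.
move=> hu hN.
have hfix : Fixp u = 0.
  apply/mpolyP => m; rewrite mcoeff_restr mcoeff0; case: ifP => // hf.
  apply: Rtf; rewrite -coef_normop_fixed // hN mcoeff0 //.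
pose fj (j : nat) := Ep (gpow A (p - j) u).
have hsum : \sum_(j < p) fj j = 0.
  apply/mpolyP => m; rewrite mcoeff_sumE mcoeff0 /fj.
  under eq_bigr => j _ do rewrite mcoeff_restr.
  case: (Rp m); last by rewrite big1.
  under eq_bigr => j _ do rewrite coef_gpow.
  rewrite (@sum_rev (fun k => u@_(mp (s ^+ k)%g m))); last by move=> k; rewrite mp_mod.
  by rewrite -coef_normop hN mcoeff0.
pose H (j : nat) := \sum_(i < j) gpow A i (fj j).
exists (\sum_(j < p) H j); split.
  apply: rpred_sum => j _; apply: rpred_sum => i _; apply: gpow_homog.
  by apply: restr_homog; apply: gpow_homog.
rewrite gact_sum -sumrB.
rewrite (eq_bigr (fun j : 'I_p => gpow A j (fj j) - fj j)); last first.
  by move=> j _; rewrite /H gact_partial.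
rewrite sumrB hsum subr0 {1}[u]decomp hfix add0r //.
Qed.

Lemma perm_notB0 m : fixedm m -> ~ (exists h : {mpoly R[r]}, 'X_[m] = normop p A h).
Proof.
move=> hf [h hh]; have := congr1 (mcoeff m) hh.
rewrite coef_normop_fixed // mcoeffX eqxx => e.
by move: (R1 (h@_m)); rewrite -e eqxx.
Qed.

Lemma gact_fixedX m : fixedm m -> gact A ('X_[m] : {mpoly R[r]}) = 'X_[m].
Proof.
move=> /eqP hf; rewrite hs msymX; congr 'X_[_].
change (mp (s^-1)%g m = m); by rewrite -{1}hf -mpM mulVg mp1.
Qed.

End PermFW.

End L3.
Import L3.

Module L4.
Set Implicit Arguments. Unset Strict Implicit. Unset Printing Implicit Defensive.
Import Order.TTheory GRing.Theory Num.Theory.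

Section Padic.
Local Open Scope ring_scope.
Variable p : nat.
Hypothesis hp : prime p.

Lemma zqE : zq p = p.
Proof. by rewrite /zq; have := prime_gt1 hp; case: p => [|[|q]]. Qed.

Lemma zp_addE (a b : padic_int p) n : (a + b) n = modz (a n + b n) ((zq p ^ n.+1)%N%:Z).
Proof. by []. Qed.

Lemma zp_0E n : (0 : padic_int p) n = 0.
Proof. by rewrite /= mod0z. Qed.

Lemma zp_1E n : (1 : padic_int p) n = 1.
Proof.
rewrite /= modz_small // zqE; apply/andP; split => //.
rewrite ltz_nat expnS; have := prime_gt1 hp => h.
have : (0 < p ^ n)%N by rewrite expn_gt0 prime_gt0.
nia.
Qed.

Lemma zp_MnE (a : padic_int p) k n : (a *+ k) n = modz (a n * k%:Z) ((zq p ^ n.+1)%N%:Z).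
Proof.
elim: k => [|k ih]; first by rewrite mulr0n zp_0E mulr0 mod0z.
rewrite mulrS zp_addE ih modzDmr; congr modz.
by rewrite -addn1 PoszD mulrDr mulr1 addrC.
Qed.

Lemma zp_tf (a : padic_int p) : a *+ p = 0 -> a = 0.
Proof.
move=> h; apply: zp_ext => n; rewrite zp_0E.
have hn : (a *+ p) n.+1 = (0 : padic_int p) n.+1 by rewrite h.
rewrite zp_MnE zp_0E in hn.
move/dvdz_mod0P: hn; rewrite zqE expnSr PoszM dvdz_mul2r; last first.
  by rewrite eqz_nat -lt0n prime_gt0.
move=> hd; rewrite (zpvalP a n) zqE; exact/dvdz_mod0P.
Qed.

Lemma zp_n1 (a : padic_int p) : a *+ p != 1.
Proof.
apply/eqP => h; have : (a *+ p) 0%N = (1 : padic_int p) 0%N by rewrite h.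
rewrite zp_MnE zp_1E zqE expn1 modzMl => /eqP; by rewrite eq_sym oner_eq0.
Qed.

End Padic.

End L4.
Import L4.

Module L5.
Set Implicit Arguments. Unset Strict Implicit. Unset Printing Implicit Defensive.
Import Order.TTheory GRing.Theory Num.Theory.

Section GvarsSym.
Local Open Scope ring_scope.
Variables (R : comNzRingType) (r : nat) (A : 'M[int]_r) (s : 'S_r).
Hypothesis hg : forall j, tnth (gvars R A) j = 'X_(s j).

Lemma gact_msym (f : {mpoly R[r]}) : gact A f = msym s f.
Proof.
rewrite /gact -[RHS]comp_mpoly_id msym_mPo; congr comp_mpoly.
by apply: eq_from_tnth => j; rewrite hg !tnth_mktuple.
Qed.
End GvarsSym.

Definition mk (r c : nat) : 'X_{1..r} := [multinom c | _ < r].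

Lemma mdeg_mk r c : mdeg (mk r c) = (c * r)%N.
Proof. by rewrite mdegE (eq_bigr (fun _ => c)) ?sum_nat_const ?card_ord 1?mulnC // => i _; rewrite mnmE. Qed.

Lemma mk_mul r c k : (mk r c *+ k)%MM = mk r (c * k).
Proof. by apply/mnmP => i; rewrite mulmnE !mnmE. Qed.

Section PolyOrd.
Local Open Scope ring_scope.
Variables (R : comNzRingType) (p r : nat) (A : 'M[int]_r) (s : 'S_r).
Hypothesis Rtf : forall a : R, a *+ p = 0 -> a = 0.
Hypothesis R1 : forall a : R, a *+ p != 1.
Hypotheses (hpr : prime p) (hs : forall f : {mpoly R[r]}, gact A f = msym s f) (hsp : (s ^+ p)%g = 1%g).
Hypothesis r_gt0 : (0 < r)%N.
Hypothesis hconst : forall m, fixedm s m = (m == mk r (m (Ordinal r_gt0))).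

Lemma fixed_mk c : fixedm s (mk r c).
Proof. by rewrite hconst mnmE. Qed.

Lemma Fix_homog n (f : {mpoly R[r]}) : f \is n.-homog ->
  Fixp s f = if (r %| n)%N then f@_(mk r (n %/ r)) *: 'X_[mk r (n %/ r)] else 0.
Proof.
move=> hf; apply/mpolyP => m; rewrite mcoeff_restr.
have key : fixedm s m -> f@_m != 0 -> ((r %| n) && (m == mk r (n %/ r)))%N.
  rewrite hconst => /eqP em nz.
  have hdeg : mdeg m = n.
    case: (eqVneq (mdeg m) n) => // ne; move: nz; by rewrite (dhomog_nemf_coeff hf ne) eqxx.
  move: em hdeg; set c := m _ => em; rewrite em mdeg_mk => <-.
  by rewrite dvdn_mull // mulnK // eqxx.
case: ifP => hfm.
  case: (eqVneq f@_m 0) => [z|nz].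
    by case: ifP => _; rewrite ?mcoeff0 ?z // mcoeffZ mcoeffX; case: eqP => [->|]; rewrite ?z ?mulr0 ?mul0r.
  by case/andP: (key hfm nz) => -> /eqP ->; rewrite mcoeffZ mcoeffX eqxx mulr1.
case: ifP => _; rewrite ?mcoeff0 // mcoeffZ mcoeffX; case: eqP => [e|]; rewrite ?mulr0 //.
by move: hfm; rewrite -e fixed_mk.
Qed.

Theorem poly_ord : Tate_poly_ord R p A r.
Proof.
exists 'X_[mk r 1]; split.
  split; first by rewrite isSnE dhomogX /= mdeg_mk mul1n.
  exact: (gact_fixedX hs (fixed_mk 1)).
move=> n; split.
  move=> f [hf hN]; rewrite isSnE in hf.
  case: (perm_H1 Rtf hpr hs hsp hf hN) => h [hh e].
  by exists h; rewrite isSnE.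
have H0 (f : {mpoly R[r]}) : Z0 A n f -> f = Fixp s f + normop p A (Ep p s f) /\ Ep p s f \is n.-homog.
  move=> [hf hg]; rewrite isSnE in hf; split; first exact: (perm_H0 hpr hs hsp hg).
  exact: restr_homog.
case: ifP => hd.
  rewrite mpolyXn mk_mul mul1n; split; last split.
  - split; first by rewrite isSnE dhomogX /= mdeg_mk divnK.
    exact: (gact_fixedX hs (fixed_mk _)).
  - move=> [h [_ hh]]; exact: (perm_notB0 R1 hs (fixed_mk _) (ex_intro _ h hh)).
  - move=> f hZ; case: (H0 f hZ) => e hE; have hf := hZ.1; rewrite isSnE in hf.
    exists (f@_(mk r (n %/ r))); exists (Ep p s f); split; first by rewrite isSnE.
    by rewrite {1}e (Fix_homog hf) hd addrC addKr.
move=> f hZ; case: (H0 f hZ) => e hE; have hf := hZ.1; rewrite isSnE in hf.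
exists (Ep p s f); split; first by rewrite isSnE.
by rewrite {1}e (Fix_homog hf) hd add0r.
Qed.

End PolyOrd.

End L5.
Import L5.

Module L6.
Set Implicit Arguments. Unset Strict Implicit. Unset Printing Implicit Defensive.
Import Order.TTheory GRing.Theory Num.Theory.

Section Parts12.
Local Open Scope ring_scope.
Variable p : nat.
Hypothesis hp : prime p.
Let R := padic_int p.

Definition cyc : 'S_p := perm (@ordS_inj p).

Lemma cycX k (i : 'I_p) : val ((cyc ^+ k)%g i) = ((i + k) %% p)%N.
Proof.
elim: k => [|k ih]; first by rewrite expg0 perm1 addn0 modn_small.
rewrite expgSr permM /cyc permE /= ih.
by rewrite -addn1 modnDml addn1 addnS.
Qed.

Lemma cyc_p : (cyc ^+ p)%g = 1%g.
Proof. by apply/permP => i; rewrite perm1; apply/val_inj; rewrite cycX modnDr modn_small. Qed.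

Lemma gvars_reg j : tnth (gvars R (A_reg p)) j = 'X_(cyc j).
Proof.
rewrite tnth_mktuple (bigD1 (cyc j)) //= big1.
  by rewrite addr0 mxE /cyc permE eqxx /= scale1r.
move=> i ne; rewrite mxE /cyc permE in ne *; by rewrite (negbTE ne) /= scale0r.
Qed.

Lemma hconst_reg (m : 'X_{1..p}) : fixedm cyc m = (m == mk p (m (Ordinal (prime_gt0 hp)))).
Proof.
set i0 := Ordinal _.
apply/idP/idP => [hf|/eqP e].
  apply/eqP/mnmP => i; rewrite mnmE.
  have := congr1 (fun m' : 'X_{1..p} => m' i0) (fixed_pow i hf).
  rewrite /mp mnmE => <-; congr (m _); apply/val_inj; rewrite cycX /= add0n modn_small //.
rewrite /fixedm e; apply/eqP/mnmP => i; by rewrite /mp !mnmE.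
Qed.

Theorem part2 : Tate_poly_ord R p (A_reg p) p.
Proof.
exact: (poly_ord (zp_tf hp) (zp_n1 hp) hp (gact_msym gvars_reg) cyc_p hconst_reg).
Qed.

Lemma gvars_triv j : tnth (gvars R A_triv) j = 'X_((1 : 'S_1)%g j).
Proof.
rewrite tnth_mktuple big_ord1 perm1 mxE.
by rewrite !ord1 eqxx /= scale1r.
Qed.

Lemma hconst_triv (m : 'X_{1..1}) : fixedm (1 : 'S_1)%g m = (m == mk 1 (m (Ordinal (ltn0Sn 0)))).
Proof.
rewrite /fixedm mp1 eqxx; symmetry; apply/eqP/mnmP => i; by rewrite mnmE ord1.
Qed.

Theorem part1 : Tate_poly_ord R p A_triv 1.
Proof.
exact: (poly_ord (zp_tf hp) (zp_n1 hp) hp (gact_msym gvars_triv) (expg1n _ _) hconst_triv).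
Qed.

End Parts12.

End L6.
Import L6.

Module L7.
Set Implicit Arguments. Unset Strict Implicit. Unset Printing Implicit Defensive.
Import Order.TTheory GRing.Theory Num.Theory.

Lemma tele_nat (V : zmodType) (F : nat -> V) n :
  (\sum_(j < n) (F j.+1 - F j) = F n - F 0)%R.
Proof.
elim: n => [|n ih]; first by rewrite big_ord0 subrr.
by rewrite big_ord_recr /= ih addrC addrA subrK.
Qed.

Section Aug.
Local Open Scope ring_scope.
Variables (R : comNzRingType) (q : nat).
Local Notation P := q.+2.
Local Notation Q := q.+1.
Local Notation AP := (A_reg P).
Local Notation AI := (A_aug P).

Definition xv (k : nat) : {mpoly R[P]} := if (k < P)%N then 'X_(inord k) else 0.
Definition yv (k : nat) : {mpoly R[Q]} := if (k < Q)%N then 'X_(inord k) else 0.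
Definition zz (k : nat) : {mpoly R[Q]} := if k is k'.+1 then yv k' else 0.
Definition pit : P.-tuple {mpoly R[Q]} := [tuple zz i.+1 - zz i | i < P].
Definition pi (F : {mpoly R[P]}) : {mpoly R[Q]} := F \mPo pit.
Definition st : Q.-tuple {mpoly R[P]} := [tuple \sum_(j < i.+1) xv j | i < Q].
Definition sec (f : {mpoly R[Q]}) : {mpoly R[P]} := f \mPo st.
Definition sig : {mpoly R[P]} := \sum_(i < P) 'X_i.

Lemma xvE (i : 'I_P) : xv i = 'X_i.
Proof. by rewrite /xv ltn_ord inord_val. Qed.
Lemma yvE (i : 'I_Q) : yv i = 'X_i.
Proof. by rewrite /yv ltn_ord inord_val. Qed.

Lemma yv_homog k : yv k \is 1.-homog.
Proof. rewrite /yv; case: ifP => _; last exact: rpred0. by rewrite dhomogX /= mdeg1. Qed.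
Lemma xv_homog k : xv k \is 1.-homog.
Proof. rewrite /xv; case: ifP => _; last exact: rpred0. by rewrite dhomogX /= mdeg1. Qed.
Lemma zz_homog k : zz k \is 1.-homog.
Proof. case: k => [|k] /=; [exact: rpred0 | exact: yv_homog]. Qed.

Lemma pit_homog i : tnth pit i \is 1.-homog.
Proof. by rewrite tnth_mktuple rpredB // zz_homog. Qed.
Lemma st_homog i : tnth st i \is 1.-homog.
Proof. by rewrite tnth_mktuple; apply: rpred_sum => j _; apply: xv_homog. Qed.

Lemma pi_homog n F : F \is n.-homog -> pi F \is n.-homog.
Proof. apply: comp_homog; exact: pit_homog. Qed.
Lemma sec_homog n f : f \is n.-homog -> sec f \is n.-homog.
Proof. apply: comp_homog; exact: st_homog. Qed.

Lemma piD F G : pi (F + G) = pi F + pi G. Proof. exact: comp_mpolyD. Qed.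
Lemma piB F G : pi (F - G) = pi F - pi G. Proof. exact: comp_mpolyB. Qed.
Lemma piZ c F : pi (c *: F) = c *: pi F. Proof. exact: comp_mpolyZ. Qed.
Lemma piM F G : pi (F * G) = pi F * pi G. Proof. exact: (rmorphM (comp_mpoly pit)). Qed.
Lemma piX F k : pi (F ^+ k) = pi F ^+ k. Proof. exact: (rmorphXn (comp_mpoly pit)). Qed.
Lemma pi0 : pi 0 = 0. Proof. exact: comp_mpoly0. Qed.
Lemma pi_sum I (s : seq I) (Pr : pred I) (F : I -> {mpoly R[P]}) :
  pi (\sum_(i <- s | Pr i) F i) = \sum_(i <- s | Pr i) pi (F i).
Proof. exact: (raddf_sum (comp_mpoly pit)). Qed.
Lemma secB f g : sec (f - g) = sec f - sec g. Proof. exact: comp_mpolyB. Qed.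
Lemma sec0 : sec 0 = 0. Proof. exact: comp_mpoly0. Qed.

Lemma piXv (i : 'I_P) : pi 'X_i = zz i.+1 - zz i.
Proof. by rewrite /pi comp_mpolyXU -tnth_nth tnth_mktuple. Qed.

Lemma pi_xv j : (j < P)%N -> pi (xv j) = zz j.+1 - zz j.
Proof. by move=> hj; rewrite /xv hj piXv inordK. Qed.

Lemma pi_sec f : pi (sec f) = f.
Proof.
rewrite /pi /sec comp_mpolyA -[RHS]comp_mpoly_id; congr comp_mpoly.
apply: eq_from_tnth => i; rewrite !tnth_mktuple.
rewrite (raddf_sum (comp_mpoly pit)) /=.
rewrite (eq_bigr (fun j : 'I_i.+1 => zz j.+1 - zz j)); last first.
  move=> j _; apply: pi_xv; have := ltn_ord j; have := ltn_ord i; lia.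
by rewrite tele_nat /= subr0 yvE.
Qed.

Lemma pi_sig : pi sig = 0.
Proof.
rewrite /sig pi_sum (eq_bigr (fun j : 'I_P => zz j.+1 - zz j)); last by move=> j _; rewrite piXv.
by rewrite tele_nat /= /yv ltnn subrr.
Qed.


Lemma gvars_regR j : tnth (gvars R AP) j = 'X_(cyc P j).
Proof.
rewrite tnth_mktuple (bigD1 (cyc P j)) //= big1.
  by rewrite addr0 mxE /cyc permE eqxx /= scale1r.
move=> i ne; rewrite mxE /cyc permE in ne *; by rewrite (negbTE ne) /= scale0r.
Qed.

Lemma gactXU (r : nat) (A : 'M[int]_r) (j : 'I_r) : gact A ('X_j : {mpoly R[r]}) = tnth (gvars R A) j.
Proof. by rewrite /gact comp_mpolyXU -tnth_nth. Qed.

Lemma sum_ind k : \sum_(i < Q) (((i : nat) == k : int)%:~R : R) *: ('X_i : {mpoly R[Q]}) = yv k.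
Proof.
rewrite /yv; case: ifP => hk.
  rewrite (bigD1 (inord k)) //= inordK // eqxx /= scale1r big1 ?addr0 //.
  move=> i ne; case: eqP => e; last by rewrite /= scale0r.
  by move: ne; rewrite -e inord_val eqxx.
apply: big1 => i _; case: eqP => e; last by rewrite /= scale0r.
by move: (ltn_ord i); rewrite e hk.
Qed.

Lemma gvars_aug (j : 'I_Q) : tnth (gvars R AI) j = yv j.+1 - yv 0.
Proof.
rewrite tnth_mktuple.
rewrite (eq_bigr (fun i : 'I_Q => (((i : nat) == j.+1 : int)%:~R : R) *: 'X_i - (((i : nat) == 0%N : int)%:~R : R) *: 'X_i)); last first.
  by move=> i _; rewrite mxE intrB scalerBl.
by rewrite sumrB !sum_ind.
Qed.

Lemma gact_zz k : (k <= Q)%N -> gact AI (zz k) = if k is 0 then 0 else zz k.+1 - zz 1.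
Proof.
case: k => [|k] hk /=; first by rewrite gact0.
have hk' : (k < Q)%N by [].
rewrite /yv hk' gactXU gvars_aug inordK //.
Qed.

Lemma pi_gact F : pi (gact AP F) = gact AI (pi F).
Proof.
rewrite /pi /gact !comp_mpolyA; congr comp_mpoly.
apply: eq_from_tnth => i; rewrite [LHS]tnth_mktuple [RHS]tnth_mktuple gvars_regR comp_mpolyXU -tnth_nth tnth_mktuple.
rewrite tnth_mktuple -/(gact AI (zz i.+1 - zz i)) gactB.
have hc := @cycX P 1 i; rewrite expg1 addn1 in hc.
have := ltn_ord i; rewrite ltnS leq_eqVlt => /orP[/eqP ei | li].
  have c0 : val (cyc P i) = 0%N by rewrite hc ei modnn.
  rewrite c0 ei (gact_zz (leqnn _)) /=.
  have yQ : yv Q = 0 by rewrite /yv ltnn.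
  by rewrite yQ gact0 !sub0r opprK subr0.
have c1 : val (cyc P i) = i.+1 by rewrite hc modn_small.
rewrite c1 (gact_zz li).
case: (nat_of_ord i) li => [|i'] li /=; first by rewrite gact0 subr0.
rewrite (gact_zz (ltnW li)) /=; by rewrite opprB addrA subrK.
Qed.
End Aug.

End L7.
Import L7.

Module L8.
Set Implicit Arguments. Unset Strict Implicit. Unset Printing Implicit Defensive.
Import Order.TTheory GRing.Theory Num.Theory.

Section Aug2.
Local Open Scope ring_scope.
Variables (R : comNzRingType) (q : nat).
Local Notation P := q.+2.
Local Notation Q := q.+1.
Local Notation AP := (A_reg P).
Local Notation AI := (A_aug P).
Local Notation sig := (@sig R q).
Local Notation pi := (@L7.pi R q).
Local Notation sec := (@sec R q).
Local Notation xv := (@xv R q).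
Local Notation zz := (@zz R q).
Local Notation yv := (@yv R q).

Lemma sig_coef m : sig@_m = if [exists i : 'I_P, U_(i)%MM == m] then 1 else 0.
Proof.
rewrite /sig mcoeff_sumE; case: existsP => [[i /eqP <-]|ne].
  rewrite (bigD1 i) //= mcoeffX eqxx big1 ?addr0 // => j nij.
  rewrite mcoeffX; case: eqP => // /mnmP /(_ i); rewrite !mnm1E eqxx.
  by rewrite (negbTE nij).
apply: big1 => j _; rewrite mcoeffX; case: eqP => // e.
by case: ne; exists j; rewrite e.
Qed.

Lemma sig_neq0 : sig != 0.
Proof.
apply/eqP => /(congr1 (mcoeff U_(@ord0 q.+1)%MM)); rewrite sig_coef mcoeff0.
case: existsP => [_|[]]; first by move/eqP; rewrite oner_eq0.
by exists ord0.
Qed.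

Lemma sig_lreg : GRing.lreg sig.
Proof.
apply: lreg_mleadc; have := mlead_supp sig_neq0; rewrite mcoeff_msupp sig_coef.
case: ifP => _; [by move=> _; exact: lreg1 | by rewrite eqxx].
Qed.

Lemma sig_homog : sig \is 1.-homog.
Proof. apply: rpred_sum => i _; by rewrite dhomogX /= mdeg1. Qed.

Lemma pihomog_other h d (F : {mpoly R[P]}) : F \is h.-homog -> d != h -> pihomog mdeg d F = 0.
Proof.
move=> /dhomogP hF ne; rewrite pihomogE big_seq_cond big_pred0 // => m.
apply/negP => /andP[/hF e1 /eqP e2]; move: ne; rewrite -e2. by rewrite e1 eqxx.
Qed.

Lemma pihomog_sigM d (Qd : {mpoly R[P]}) :
  pihomog mdeg d (sig * Qd) = if d is d'.+1 then sig * pihomog mdeg d' Qd else 0.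
Proof.
have hh (m : 'X_{1..P}) : sig * 'X_[m] \is (mdeg m).+1.-homog.
  have hX : ('X_[m] : {mpoly R[P]}) \is (mdeg m).-homog by rewrite dhomogX.
  by have := dhomogM sig_homog hX; rewrite add1n.
case: d => [|d].
  rewrite [Qd]mpolyE mulr_sumr raddf_sum /=.
  apply: big1 => m _; rewrite -scalerAr linearZ /=.
  by rewrite (@pihomog_other (mdeg m).+1) ?scaler0.
rewrite [Qd]mpolyE mulr_sumr !raddf_sum /= mulr_sumr.
apply: eq_bigr => m _; rewrite -scalerAr !linearZ /= pihomogX -scalerAr; congr (_ *: _).
case: eqP => [<-|ne]; first by rewrite pihomog_dE // mulr1.
rewrite mulr0 (pihomog_other (hh m)) //; apply/eqP; case => e; exact: ne.
Qed.

Lemma sig_factor n (F Qd : {mpoly R[P]}) : F \is n.-homog -> F = sig * Qd ->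
  exists Q', [/\ Q' \is n.-1.-homog, F = sig * Q' & (n = 0%N -> Q' = 0)].
Proof.
move=> hF e; exists (if n is n'.+1 then pihomog mdeg n' Qd else 0); split.
- by case: n hF e => [|n] _ _; [exact: rpred0 | exact: pihomogP].
- by rewrite -(pihomog_dE hF) e pihomog_sigM; case: n {hF e} => [|n]; rewrite ?mulr0.
- by move=> ->.
Qed.

End Aug2.

End L8.
Import L8.

Module L9.
Set Implicit Arguments. Unset Strict Implicit. Unset Printing Implicit Defensive.
Import Order.TTheory GRing.Theory Num.Theory.

Section DivS.
Local Open Scope ring_scope.
Variables (R : comNzRingType) (n : nat) (s0 : {mpoly R[n]}).

Definition Dv (G : {mpoly R[n]}) := exists Qd, G = s0 * Qd.

Lemma Dv0 : Dv 0. Proof. by exists 0; rewrite mulr0. Qed.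
Lemma DvD a b : Dv a -> Dv b -> Dv (a + b).
Proof. by move=> [x ->] [y ->]; exists (x + y); rewrite mulrDr. Qed.
Lemma DvN a : Dv a -> Dv (- a).
Proof. by move=> [x ->]; exists (- x); rewrite mulrN. Qed.
Lemma DvMl a b : Dv a -> Dv (b * a).
Proof. by move=> [x ->]; exists (b * x); rewrite mulrCA. Qed.
Lemma DvMr a b : Dv a -> Dv (a * b).
Proof. by move=> [x ->]; exists (x * b); rewrite mulrA. Qed.
Lemma DvZ c a : Dv a -> Dv (c *: a).
Proof. by move=> [x ->]; exists (c *: x); rewrite scalerAr. Qed.
Lemma Dv_sum I (r : seq I) (F : I -> {mpoly R[n]}) :
  (forall i, Dv (F i)) -> Dv (\sum_(i <- r) F i).
Proof. by move=> h; elim/big_rec: _ => [|i x _ hx]; [exact: Dv0 | exact: DvD]. Qed.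

Lemma cong_mul a1 b1 a2 b2 : Dv (a1 - b1) -> Dv (a2 - b2) -> Dv (a1 * a2 - b1 * b2).
Proof.
move=> h1 h2; have -> : a1 * a2 - b1 * b2 = (a1 - b1) * a2 + b1 * (a2 - b2).
  by rewrite mulrBl mulrBr addrA subrK.
by apply: DvD; [exact: DvMr | exact: DvMl].
Qed.

Lemma cong_exp a b k : Dv (a - b) -> Dv (a ^+ k - b ^+ k).
Proof.
move=> h; elim: k => [|k ih]; first by rewrite !expr0 subrr; exact: Dv0.
by rewrite !exprS; apply: cong_mul.
Qed.

Lemma cong_prod m (f g : 'I_m -> {mpoly R[n]}) : (forall i, Dv (f i - g i)) ->
  Dv (\prod_i f i - \prod_i g i).
Proof.
move=> h; elim/big_rec2: _ => [|i x y _ hxy]; first by rewrite subrr; exact: Dv0.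
exact: cong_mul.
Qed.

Lemma Dv_comp (F : {mpoly R[n]}) (t : n.-tuple {mpoly R[n]}) :
  (forall i, Dv (tnth t i - 'X_i)) -> Dv (F \mPo t - F).
Proof.
move=> ht; rewrite comp_mpolyEX {3}[F]mpolyE -sumrB; apply: Dv_sum => m.
rewrite -scalerBr; apply: DvZ; rewrite comp_mpolyX mpolyXE_id.
by apply: cong_prod => i; apply: cong_exp.
Qed.

End DivS.

Section Aug3.
Local Open Scope ring_scope.
Variables (R : comNzRingType) (q : nat).
Local Notation P := q.+2.
Local Notation Q := q.+1.
Local Notation AP := (A_reg P).
Local Notation AI := (A_aug P).
Local Notation sig := (@sig R q).
Local Notation pi := (@L7.pi R q).
Local Notation sec := (@sec R q).
Local Notation xv := (@xv R q).
Local Notation zz := (@zz R q).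
Local Notation yv := (@yv R q).

Lemma sec_zz k : (k <= Q)%N -> sec (zz k) = \sum_(j < k) xv j.
Proof.
case: k => [|k] hk; first by rewrite big_ord0 /sec comp_mpoly0.
rewrite /= /yv hk /sec comp_mpolyXU -tnth_nth tnth_mktuple inordK //.
Qed.

Lemma sec_zzP : sec (zz P) = 0.
Proof. by rewrite /= /yv ltnn /sec comp_mpoly0. Qed.

Lemma sig_xv : sig = \sum_(j < Q) xv j + 'X_(ord_max).
Proof.
rewrite /sig (eq_bigr (fun i : 'I_P => xv i)); last by move=> i _; rewrite xvE.
by rewrite big_ord_recr xvE.
Qed.

Lemma theta (F : {mpoly R[P]}) :
  sec (pi F) = F \mPo [tuple (tnth (pit R q) i) \mPo (st R q) | i < P].
Proof. by rewrite /sec /pi comp_mpolyA. Qed.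

Lemma theta_div (F : {mpoly R[P]}) : Dv sig (sec (pi F) - F).
Proof.
rewrite theta; apply: Dv_comp => i; rewrite !tnth_mktuple.
rewrite -/(sec (zz i.+1 - zz i)) secB.
have := ltn_ord i; rewrite ltnS leq_eqVlt => /orP[/eqP ei | li].
  rewrite ei sec_zzP sec_zz //; have -> : i = ord_max by apply/val_inj.
  rewrite sig_xv sub0r -opprD; apply: DvN.
  by exists 1; rewrite mulr1.
rewrite (sec_zz li) (sec_zz (ltnW li)) big_ord_recr /= [_ + xv i]addrC addrK xvE subrr.
exact: Dv0.
Qed.

Lemma kernel n (F : {mpoly R[P]}) : F \is n.-homog -> pi F = 0 ->
  exists Qd, [/\ Qd \is n.-1.-homog, F = sig * Qd & (n = 0%N -> Qd = 0)].
Proof.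
move=> hF h0; have := theta_div F; rewrite h0 /sec comp_mpoly0 sub0r => /DvN.
rewrite opprK => [[Qd e]]; exact: sig_factor hF e.
Qed.

End Aug3.

End L9.
Import L9.

Module L10.
Set Implicit Arguments. Unset Strict Implicit. Unset Printing Implicit Defensive.
Import Order.TTheory GRing.Theory Num.Theory.

Section Aug4.
Local Open Scope ring_scope.
Variables (R : comNzRingType) (q : nat).
Local Notation P := q.+2.
Local Notation Q := q.+1.
Local Notation AP := (A_reg P).
Local Notation AI := (A_aug P).
Local Notation sig := (@sig R q).
Local Notation pi := (@L7.pi R q).
Local Notation sec := (@sec R q).

Lemma gactP_sig : gact AP sig = sig.
Proof.
rewrite /sig gact_sum (eq_bigr (fun i : 'I_P => 'X_(cyc P i))); last first.
  by move=> i _; rewrite gactXU gvars_regR.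
by rewrite [RHS](reindex_inj (@perm_inj _ (cyc P))).
Qed.

Lemma gpowP_id (F : {mpoly R[P]}) : gpow AP P F = F.
Proof. by rewrite (gpow_sym (gact_msym (@gvars_regR R q))) cyc_p msym1m. Qed.

Lemma gpowP_X k (i : 'I_P) : gpow AP k ('X_i : {mpoly R[P]}) = 'X_((cyc P ^+ k)%g i).
Proof.
elim: k => [|k ih]; first by rewrite expg0 perm1.
by rewrite gpowS ih gactXU gvars_regR expgSr permM.
Qed.

Lemma NP_X0 : normop P AP ('X_ord0 : {mpoly R[P]}) = sig.
Proof.
rewrite /normop /sig; apply: eq_bigr => k _; rewrite gpowP_X; congr 'X_(_).
by apply/val_inj; rewrite cycX /= add0n modn_small.
Qed.

Lemma pi_gpow k F : pi (gpow AP k F) = gpow AI k (pi F).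
Proof. by elim: k => //= k ih; rewrite pi_gact ih. Qed.

Lemma pi_normop F : pi (normop P AP F) = normop P AI (pi F).
Proof. by rewrite /normop pi_sum; apply: eq_bigr => k _; rewrite pi_gpow. Qed.

Lemma gpowI_id (f : {mpoly R[Q]}) : gpow AI P f = f.
Proof. by rewrite -(pi_sec f) -pi_gpow gpowP_id. Qed.

Lemma normopP_gact (F : {mpoly R[P]}) : normop P AP (gact AP F - F) = 0.
Proof. by rewrite normop_gact gpowP_id subrr. Qed.

Lemma gactP_normop (F : {mpoly R[P]}) : gact AP (normop P AP F) = normop P AP F.
Proof. by apply/eqP; rewrite -subr_eq0 gact_normop gpowP_id subrr. Qed.

Lemma gactX r (A : 'M[int]_r) (F : {mpoly R[r]}) k : gact A (F ^+ k) = (gact A F) ^+ k.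
Proof. exact: (rmorphXn (comp_mpoly (gvars R A))). Qed.

Lemma sig_cancel (a b : {mpoly R[P]}) : sig * a = sig * b -> a = b.
Proof. exact: sig_lreg. Qed.

Lemma mulsig_homog n (H : {mpoly R[P]}) : (0 < n)%N -> H \is n.-1.-homog -> sig * H \is n.-homog.
Proof. by move=> hn hH; have := dhomogM (sig_homog R q) hH; rewrite add1n prednK. Qed.

End Aug4.

End L10.
Import L10.

Module L11.
Set Implicit Arguments. Unset Strict Implicit. Unset Printing Implicit Defensive.
Import Order.TTheory GRing.Theory Num.Theory.

Section Chase.
Local Open Scope ring_scope.
Variables (R : comNzRingType) (q : nat).
Local Notation P := q.+2.
Local Notation Q := q.+1.
Local Notation AP := (A_reg P).
Local Notation AI := (A_aug P).
Local Notation sig := (@sig R q).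
Local Notation pi := (@L7.pi R q).
Local Notation sec := (@sec R q).
Variable cP : {mpoly R[P]}.
Hypothesis hc : Z0 AP P cP.
Hypothesis hH1 : forall n, H1_zero R P AP n.
Hypothesis hH0 : forall n, if (P %| n)%N then H0_line P AP n (cP ^+ (n %/ P)) else H0_zero R P AP n.

Lemma lift0 n (f : {mpoly R[Q]}) : Z0 AI n f -> exists F', Z0 AP n F' /\ pi F' = f.
Proof.
move=> [hf hg]; rewrite isSnE in hf.
have hF := sec_homog hf; have pF := pi_sec f.
have hk : pi (gact AP (sec f) - sec f) = 0 by rewrite piB pi_gact pF hg subrr.
have hh : gact AP (sec f) - sec f \is n.-homog by rewrite rpredB // gact_homog.
case: (kernel hh hk) => Qd [hQ e hz].
have [H [eH hH]] : exists H, Qd = gact AP H - H /\ sig * H \is n.-homog.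
  case: (posnP n) => [n0|npos].
    by exists 0; rewrite hz // gact0 subrr mulr0 rpred0.
  have hN : normop P AP Qd = 0.
    apply: (@sig_cancel R q); rewrite mulr0 -normopMl ?gactP_sig //.
    by rewrite -e normopP_gact.
  have hZ : Z1 P AP n.-1 Qd by split; [rewrite isSnE | ].
  case: (hH1 hZ) => H [hH eH].
  by exists H; split => //; apply: mulsig_homog => //; rewrite -isSnE.
exists (sec f - sig * H); split; last by rewrite piB piM pi_sig mul0r subr0.
split; first by rewrite isSnE rpredB.
rewrite gactB gactM gactP_sig.
have : gact AP (sec f) = sec f + sig * Qd by rewrite -e addrC subrK.
move=> ->; rewrite eH; ring.
Qed.

Lemma H0I_zero n : ~~ (P %| n)%N -> H0_zero R P AI n.
Proof.
move=> hd f hZ; case: (lift0 hZ) => F' [hF' <-].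
have := hH0 n; rewrite (negbTE hd) => h0; case: (h0 F' hF') => K [hK ->].
exists (pi K); split; last exact: pi_normop.
by rewrite isSnE; apply: pi_homog; rewrite -isSnE.
Qed.

Lemma H0I_line n : (P %| n)%N -> H0_line P AI n (pi cP ^+ (n %/ P)).
Proof.
move=> hd; have := hH0 n; rewrite hd => -[hZc [hnB hspan]].
have hcn : cP ^+ (n %/ P) \is n.-homog by rewrite -isSnE; exact: hZc.1.
split; last split.
- split; first by rewrite isSnE -piX pi_homog.
  by rewrite -piX -pi_gact hZc.2.
- move=> [h [hh e]]; rewrite -piX in e; rewrite isSnE in hh.
  have hk : pi (cP ^+ (n %/ P) - normop P AP (sec h)) = 0.
    by rewrite piB pi_normop pi_sec e subrr.
  have hhom : cP ^+ (n %/ P) - normop P AP (sec h) \is n.-homog.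
    by rewrite rpredB // normop_homog // sec_homog.
  case: (kernel hhom hk) => Qd [hQ e2 hz].
  case: (posnP n) => [n0|npos].
    apply: hnB; exists (sec h); split; first by rewrite isSnE sec_homog.
    by apply/eqP; rewrite -subr_eq0 e2 hz // mulr0.
  have gQ : gact AP Qd = Qd.
    apply: (@sig_cancel R q); rewrite -{1}gactP_sig -gactM -e2 gactB gactP_normop.
    by rewrite hZc.2.
  have hd1 : ~~ (P %| n.-1)%N.
    apply/negP => h1; have : (P %| n - n.-1)%N by rewrite dvdn_sub.
    rewrite (_ : n - n.-1 = 1)%N; last lia.
    by rewrite dvdn1.
  have := hH0 n.-1; rewrite (negbTE hd1) => h0.
  have hZQ : Z0 AP n.-1 Qd by split; [rewrite isSnE | ].
  case: (h0 Qd hZQ) => K [hK eK].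
  apply: hnB; exists (sec h + sig * K); split.
    by rewrite isSnE rpredD ?sec_homog // mulsig_homog // -isSnE.
  rewrite normopD normopMl ?gactP_sig // -eK.
  by rewrite -e2 addrC subrK.
- move=> f hZ; case: (lift0 hZ) => F' [hF' <-].
  case: (hspan F' hF') => a [K [hK eK]].
  exists a; exists (pi K); split; first by rewrite isSnE pi_homog // -isSnE.
  by rewrite -piX -piZ -piB eK pi_normop.
Qed.

Definition eI : {mpoly R[Q]} := pi 'X_(@ord0 q.+1).

Lemma X0_homog : ('X_(@ord0 q.+1) : {mpoly R[P]}) \is 1.-homog.
Proof. by rewrite dhomogX /= mdeg1. Qed.

Lemma normop_cX k : gact AP (cP ^+ k) = cP ^+ k ->
  normop P AP (cP ^+ k * 'X_ord0) = cP ^+ k * sig.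
Proof. by move=> hk; rewrite normopMl // NP_X0. Qed.

Lemma gact_cPk k : gact AP (cP ^+ k) = cP ^+ k.
Proof. by rewrite gactX hc.2. Qed.

Lemma H1I n (f : {mpoly R[Q]}) : Z1 P AI n f ->
  exists a : R, B1 AI n (f - a *: (pi cP ^+ (n %/ P) * eI)) /\ ((n %% P != 1)%N -> a = 0).
Proof.
move=> [hf hN]; rewrite isSnE in hf.
have hF := sec_homog hf; have pF := pi_sec f.
have hk : pi (normop P AP (sec f)) = 0 by rewrite pi_normop pF.
case: (kernel (normop_homog AP P hF) hk) => Qd [hQ e1 hz].
have gQ : gact AP Qd = Qd.
  apply: (@sig_cancel R q); rewrite -{1}gactP_sig -gactM -e1 gactP_normop //.
have hZQ : Z0 AP n.-1 Qd by split; [rewrite isSnE | ].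
set k := (n %/ P)%N.
have [a [K [eQ hK1 hK2 ha]]] : exists a : R, exists K, [/\ Qd = a *: cP ^+ k + normop P AP K,
    sig * K \is n.-homog, a *: (cP ^+ k * 'X_ord0) \is n.-homog & ((n %% P != 1)%N -> a = 0)].
  case: (posnP n) => [n0|npos].
    exists 0; exists 0; rewrite hz // normop0 scale0r addr0 mulr0 rpred0; split => //.
    by rewrite scale0r rpred0.
  have := hH0 n.-1; case: ifP => hd1.
    have ek : (n.-1 %/ P = k)%N.
      by rewrite /k -{2}(prednK npos) -[(n.-1).+1]addn1 divnDl // (@divn_small 1 P) ?addn0.
    rewrite ek => -[hZc [_ hspan]].
    case: (hspan Qd hZQ) => a [K [hK eK]].
    exists a; exists K; split.
    - by apply/eqP; rewrite addrC -subr_eq eK.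
    - by rewrite mulsig_homog // -isSnE.
    - apply: rpredZ; have := dhomogM (hZc.1 : cP ^+ k \is n.-1.-homog) X0_homog.
      by rewrite addn1 prednK.
    - move=> hn1; exfalso; move: hn1; rewrite -{1}(prednK npos) -addn1 -modnDml.
      by move/dvdnP: hd1 => [x ->]; rewrite modnMl add0n modn_small.
  move=> h0; case: (h0 Qd hZQ) => K [hK eK].
  exists 0; exists K; split.
  - by rewrite scale0r add0r.
  - by rewrite mulsig_homog // -isSnE.
  - by rewrite scale0r rpred0.
  - by [].
pose G := sec f - a *: (cP ^+ k * 'X_ord0) - sig * K.
have hG : G \is n.-homog by rewrite rpredB // rpredB.
have hNG : normop P AP G = 0.
  rewrite /G !normopB normopZ normop_cX ?gact_cPk // normopMl ?gactP_sig // e1 eQ.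
  rewrite -!mul_mpolyC; ring.
have hZG : Z1 P AP n G by split; [rewrite isSnE | ].
case: (hH1 hZG) => H [hH eH].
exists a; split => //; exists (pi H); split; first by rewrite isSnE pi_homog // -isSnE.
have := congr1 pi eH; rewrite /G !piB piZ !piM piX pi_sig mul0r subr0 pF pi_gact.
by rewrite -/eI.
Qed.

Lemma H1I_zero n : (n %% P != 1)%N -> H1_zero R P AI n.
Proof.
move=> hn f hZ; case: (H1I hZ) => a [hB ha]; by rewrite (ha hn) scale0r subr0 in hB.
Qed.

Lemma H1I_line n : (n %% P == 1)%N -> H1_line P AI n (pi cP ^+ (n %/ P) * eI).
Proof.
move=> hn.
have npos : (0 < n)%N by case: n hn => //; rewrite mod0n.
have hd1 : (P %| n.-1)%N.
  move/eqP: hn => hn; apply/dvdnP; exists (n %/ P)%N.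
  by rewrite {1}(divn_eq n P) hn addn1.
have ek : (n.-1 %/ P = n %/ P)%N.
  by rewrite -{2}(prednK npos) -[(n.-1).+1]addn1 divnDl // (@divn_small 1 P) ?addn0.
have := hH0 n.-1; rewrite hd1 ek => -[hZc [hnB _]].
have hcX : cP ^+ (n %/ P) * 'X_ord0 \is n.-homog.
  have := dhomogM (hZc.1 : cP ^+ (n %/ P) \is n.-1.-homog) X0_homog.
  by rewrite addn1 prednK.
split; last split.
- split; first by rewrite isSnE /eI -piX -piM pi_homog.
  by rewrite /eI -piX -piM -pi_normop normop_cX ?gact_cPk // piM pi_sig mulr0.
- move=> [h [hh e]]; rewrite isSnE in hh.
  have hk : pi (cP ^+ (n %/ P) * 'X_ord0 - (gact AP (sec h) - sec h)) = 0.
    by rewrite piB piM piX piB pi_gact pi_sec -e subrr.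
  have hhom : cP ^+ (n %/ P) * 'X_ord0 - (gact AP (sec h) - sec h) \is n.-homog.
    by rewrite rpredB // rpredB // ?gact_homog // sec_homog.
  case: (kernel hhom hk) => Qd [hQ e2 _].
  apply: hnB; exists Qd; split; first by rewrite isSnE.
  apply: (@sig_cancel R q); rewrite -normopMl ?gactP_sig // -e2 normopB normopP_gact subr0.
  by rewrite normop_cX ?gact_cPk // mulrC.
- move=> f hZ; case: (H1I hZ) => a [hB _]; by exists a.
Qed.

End Chase.

Section Cup.
Local Open Scope ring_scope.
Variables (R : comNzRingType) (r : nat) (A : 'M[int]_r) (p : nat).
Hypothesis hid : forall f : {mpoly R[r]}, gpow A p f = f.

Lemma gact_cup (a b : {mpoly R[r]}) :
  gact A (cup11 p A a b) - cup11 p A a b = normop p A a * b - a * normop p A b.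
Proof.
pose Aj (j : nat) := \sum_(i < j) gpow A i a.
pose T (j : nat) := Aj j * gpow A j b.
have ecup : cup11 p A a b = \sum_(j < p) T j.
  by rewrite /cup11; apply: eq_bigr => j _; rewrite /T /Aj mulr_suml.
have gA j : gact A (Aj j) = Aj j.+1 - a.
  have := gact_partial A j a; rewrite -/(Aj j) => /eqP; rewrite subr_eq => /eqP ->.
  by rewrite /Aj big_ord_recr /=; ring.
have eg : gact A (\sum_(j < p) T j) = \sum_(j < p) T j.+1 - a * \sum_(j < p) gpow A j.+1 b.
  rewrite gact_sum mulr_sumr -sumrB; apply: eq_bigr => j _.
  by rewrite /T gactM gA -gpowS mulrBl.
have t1 := tele_nat T p; have t2 := tele_nat (fun j => gpow A j b) p.
rewrite sumrB in t1; rewrite sumrB in t2.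
have e1 : \sum_(j < p) T j.+1 = \sum_(j < p) T j + T p - T 0.
  by rewrite -addrA -t1 addrC subrK.
have e2 : \sum_(j < p) gpow A j.+1 b = \sum_(j < p) gpow A j b + gpow A p b - gpow A 0 b.
  by rewrite -addrA -t2 addrC subrK.
rewrite ecup eg e1 e2 /T /Aj big_ord0 mul0r subr0 hid /= -/(normop p A a) -/(normop p A b).
ring.
Qed.

End Cup.

End L11.
Import L11.

Module L12.
Set Implicit Arguments. Unset Strict Implicit. Unset Printing Implicit Defensive.
Import Order.TTheory GRing.Theory Num.Theory.

Section Final.
Local Open Scope ring_scope.
Variables (R : comNzRingType) (q : nat).
Local Notation P := q.+2.
Local Notation Q := q.+1.
Local Notation AP := (A_reg P).
Local Notation AI := (A_aug P).
Hypothesis Rtf : forall a : R, a *+ P = 0 -> a = 0.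
Hypothesis R1 : forall a : R, a *+ P != 1.
Hypothesis hpr : prime P.
Hypothesis hq : (0 < q)%N.

Theorem part3_gen : Tate_poly_ext R P AI P.
Proof.
have HP : Tate_poly_ord R P AP P.
  exact: (poly_ord Rtf R1 hpr (gact_msym (@gvars_regR R q)) (@cyc_p P) (hconst_reg hpr)).
case: HP => cP [hc hall].
have hH1 n : H1_zero R P AP n := (hall n).1.
have hH0 n := (hall n).2.
exists (L7.pi cP), (eI R q); split; last split; last split.
- split; first by rewrite isSnE pi_homog // -isSnE; exact: hc.1.
  by rewrite -pi_gact hc.2.
- split; first by rewrite isSnE /eI pi_homog // X0_homog.
  by rewrite /eI -pi_normop NP_X0 pi_sig.
- apply: (H0I_zero hH1 hH0).
    by apply/negP => /dvdn_leq; lia.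
  split.
    rewrite isSnE /cup11; apply: rpred_sum => j _; apply: rpred_sum => i _.
    by rewrite (_ : 2 = 1 + 1)%N // dhomogM // gpow_homog // pi_homog // X0_homog.
  apply/eqP; rewrite -subr_eq0 gact_cup; last exact: gpowI_id.
  by rewrite -pi_normop NP_X0 pi_sig mul0r mulr0 subrr.
- move=> n; split.
    case: ifP => hd; first exact: (H0I_line hH1 hH0).
    by apply: (H0I_zero hH1 hH0); rewrite hd.
  case: ifP => hd; first exact: (H1I_line hc hH1 hH0).
  by apply: (H1I_zero hc hH1 hH0); rewrite hd.
Qed.

End Final.

End L12.
Import L12.

Unset Implicit Arguments.
Set Strict Implicit.
Theorem corollary2p8 (p : nat) (hp : prime p) :
  (* H^*(g, S^*(Z_p)) = F_p[c], c ordinary of degree 1 *)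
  Tate_poly_ord (padic_int p) p A_triv 1
  (* H^*(g, S^*(Z_p[G])) = F_p[c], c ordinary of degree p *)
  /\ Tate_poly_ord (padic_int p) p (A_reg p) p
  (* p odd: H^*(g, S^*(I)) = F_p[c] (x) Lambda[e], c ordinary of degree p,
     e super of degree 1 *)
  /\ (odd p -> Tate_poly_ext (padic_int p) p (A_aug p) p).
Proof.
split; first exact: part1 hp.
split; first exact: part2 hp.
move=> hodd; move: hp hodd; case: p => [|[|q]] // hp hodd.
have hq : (0 < q)%N by case: q hp hodd.
exact: (part3_gen (zp_tf hp) (zp_n1 hp) hp hq).
Qed.
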